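(* For each integer $\omega$, there is a proof labeling scheme $(\mathsf{P},\mathsf{V})$ of size $O(\log n)$ for the class of graphs of locally verifiable treewidth at most $\omega$.
   Context: An elimination tree of a connected graph $G$ is a rooted tree $F$ with $V(F)=V(G)$ such that for every edge $uv$ of $G$, one of $u,v$ is an ancestor of the other in $F$. For $v\in V(F)$ let $F_v$ be the subtree rooted at $v$ and $\mathsf{str}(v)$ the set consisting of $v$ and all strict ancestors of $v$ having a neighbour in $V(F_v)$; the width of $F$ is $\max_v|\mathsf{str}(v)|-1$. An oriented path system $\mathcal{P}$ over $G$ is a set of oriented paths, each obtained by orienting the edges of a path of $G$. The congestion of a vertex $v$ in $\mathcal{P}$ is the number of paths of $\mathcal{P}$ having $v$ as starting vertex or internal vertex (paths ending at $v$ are not counted); the congestion of $\mathcal{P}$ is the maximum over all vertices. $\mathcal{P}$ witnesses an elimination tree $F$ if for every vertex $v$ with parent $\mathsf{p}(v)$ in $F$, either $v\mathsf{p}(v)\in E(G)$ or $\mathcal{P}$ contains a path oriented from $v$ to $\mathsf{p}(v)$. A graph has locally verifiable treewidth at most $k$ if each connected component admits an elimination tree $F$ of width at most $k$ and an oriented path system of congestion at most $k$ witnessing $F$. Proof labeling scheme: vertices have unique identifiers in $\{1,\dots,n\}$; a prover assigns binary labels; the verifier at $v$ sees only $\mathsf{id}(v)$ and $(\mathsf{id}(w),\varphi(w))$ for $w\in N[v]$ and outputs Yes/No; completeness: on graphs of the class, the prover's labels make all vertices output Yes; soundness: on graphs outside the class, every labeling makes some vertex output No; size $O(\log n)$: all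 labels have length $O(\log n)$. *)

(* Defs.v *)
From mathcomp Require Import all_boot.
Set Implicit Arguments. Unset Strict Implicit. Unset Printing Implicit Defensive.

Definition simple_graph (T : finType) (e : rel T) : Prop :=
  symmetric e /\ irreflexive e.

Definition prel (T : finType) (p : T -> option T) : rel T :=
  fun x y => p x == Some y.

(* [connect (prel p) u a] : a is an ancestor of u (reflexive).
   [sanc p v a] : a is a strict ancestor of v. *)
Definition sanc (T : finType) (p : T -> option T) (v a : T) : bool :=
  if p v is Some x then connect (prel p) x a else false.

Definition rooted_tree_on (T : finType) (C : {set T}) (r : T)
    (p : T -> option T) : Prop :=
  [/\ r \in C, p r = None,
      (forall v w, v \in C -> p v = Some w -> w \in C)
    & (forall v, v \in C -> connect (prel p) v r)].

Definition elim_tree (T : finType) (e : rel T) (C : {set T}) (r : T)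
    (p : T -> option T) : Prop :=
  rooted_tree_on C r p /\
  (forall u v, u \in C -> v \in C -> e u v ->
     connect (prel p) u v || connect (prel p) v u).

Definition str (T : finType) (e : rel T) (C : {set T}) (p : T -> option T)
    (v : T) : {set T} :=
  v |: [set a | sanc p v a &&
                [exists u, [&& u \in C, connect (prel p) u v & e a u]]].

(* width of F is at most k, i.e. max_v |str v| - 1 <= k *)
Definition width_le (T : finType) (e : rel T) (C : {set T})
    (p : T -> option T) (k : nat) : Prop :=
  forall v, v \in C -> #|str e C p v| <= k.+1.

(* An oriented path (x, s) is the vertex sequence x :: s, a simple path of G
   oriented from its start x to its end [last x s]. *)
Definition opath (T : finType) (e : rel T) (q : T * seq T) : bool :=
  path e q.1 q.2 && uniq (q.1 :: q.2).

(* congestion of v: number of paths with v as starting or internal vertex,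
   i.e. v among all vertices but the last one. *)
Definition congestion (T : finType) (P : seq (T * seq T)) (v : T) : nat :=
  count (fun q => v \in belast q.1 q.2) P.

Definition congestion_le (T : finType) (P : seq (T * seq T)) (k : nat) : Prop :=
  forall v, congestion P v <= k.

Definition witnesses (T : finType) (e : rel T) (C : {set T})
    (p : T -> option T) (P : seq (T * seq T)) : Prop :=
  forall v w, v \in C -> p v = Some w ->
    e v w \/ (exists2 q, q \in P & q.1 = v /\ last q.1 q.2 = w).

Definition lv_treewidth_le (T : finType) (e : rel T) (k : nat) : Prop :=
  forall v0 : T,
    let C := [set u | connect e v0 u] in
    exists (r : T) (p : T -> option T) (P : seq (T * seq T)),
      [/\ elim_tree e C r p, width_le e C p k,
          all (opath e) P, congestion_le P k & witnesses e C p P].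

Definition valid_ids (n : nat) (id : 'I_n -> nat) : Prop :=
  injective id /\ forall v, 0 < id v <= n.

Definition label := seq bool.

(* What v sees: (id w, label w) for all w in N[v], listed by increasing id
   (a canonical ordering depending only on the seen data). *)
Definition view (n : nat) (e : rel 'I_n) (id : 'I_n -> nat)
    (phi : 'I_n -> label) (v : 'I_n) : seq (nat * label) :=
  sort (fun a b : nat * label => a.1 <= b.1)
       [seq (id w, phi w) | w <- enum [set w | (w == v) || e v w]].

Definition log_size_PLS
    (cls : forall n : nat, rel 'I_n -> Prop)
    (V : nat -> seq (nat * label) -> bool) : Prop :=
  exists c : nat,
    (forall (n : nat) (e : rel 'I_n) (id : 'I_n -> nat),
       simple_graph e -> valid_ids id -> cls n e ->
       exists phi : 'I_n -> label,
         (forall v, size (phi v) <= c * (trunc_log 2 n).+1) /\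
         (forall v, V (id v) (view e id phi v) = true)) /\
    (forall (n : nat) (e : rel 'I_n) (id : 'I_n -> nat),
       simple_graph e -> valid_ids id -> ~ cls n e ->
       forall phi : 'I_n -> label,
         exists v, V (id v) (view e id phi v) = false).

(* Main.v *)
Require Import Defs.
From mathcomp Require Import all_boot zify.
From Stdlib Require Import IndefiniteDescription.
Set Implicit Arguments. Unset Strict Implicit. Unset Printing Implicit Defensive.


Fixpoint bitsN (m x : nat) : seq bool :=
  if m is m'.+1 then odd x :: bitsN m' x./2 else [::].
Definition dec_nat (s : seq bool) : nat := foldr (fun (b : bool) (a : nat) => b + a.*2) 0 s.
Definition enc_nat (x : nat) : seq bool := bitsN (trunc_log 2 x).+1 x.

Lemma bitsNK m x : x < 2 ^ m -> dec_nat (bitsN m x) = x.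
Proof.
elim: m x => [|m IH] x /=; first by rewrite expn0 ltnS leqn0 => /eqP->.
move=> hx; rewrite IH ?odd_double_half //.
by rewrite -(ltn_double) (leq_ltn_trans (leq_addl (odd x) _)) // odd_double_half -muln2 -expnSr.
Qed.

Lemma enc_natK x : dec_nat (enc_nat x) = x.
Proof. by rewrite bitsNK // trunc_log_ltn. Qed.

Lemma size_bitsN m x : size (bitsN m x) = m.
Proof. by elim: m x => //= m IH x; rewrite IH. Qed.

Lemma size_enc_nat x n : x <= n -> size (enc_nat x) <= (trunc_log 2 n).+1.
Proof. by move=> h; rewrite /enc_nat size_bitsN ltnS leq_trunc_log. Qed.

Definition dbl (s : seq bool) : seq bool := flatten [seq [:: b; b] | b <- s].
Definition encL (ls : seq (seq bool)) : seq bool :=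
  flatten [seq dbl b ++ [:: false; true] | b <- ls].
Fixpoint decA (s cur : seq bool) : seq (seq bool) :=
  match s with
  | b1 :: b2 :: s' => if b1 == b2 then decA s' (rcons cur b1) else cur :: decA s' [::]
  | _ => [::]
  end.
Definition decL s := decA s [::].

Lemma decA_cat b rest cur : decA (dbl b ++ [:: false; true] ++ rest) cur = (cur ++ b) :: decA rest [::].
Proof.
elim: b cur => [|x b IH] cur /=; first by rewrite cats0.
by rewrite eqxx IH cat_rcons.
Qed.

Lemma encLK ls : decL (encL ls) = ls.
Proof.
elim: ls => [|b ls IH] //; rewrite /decL /encL /= -catA decA_cat.
by move: IH; rewrite /decL /encL => ->.
Qed.

Lemma size_encL ls m : (forall b, b \in ls -> size b <= m) -> size (encL ls) <= size ls * (2 * m + 2).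
Proof.
elim: ls => [|b ls IH] h //=.
rewrite /encL /= size_cat -/(encL ls) mulSn leq_add //.
  rewrite size_cat /= addn2 /dbl size_flatten /shape -map_comp.
  have -> : sumn [seq (size \o (fun b0 : bool => [:: b0; b0])) i | i <- b] = 2 * size b.
    by elim: b {h} => //= x b ->; rewrite mulnS.
  have := h b (mem_head _ _); lia.
by apply: IH => c hc; apply: h; rewrite inE hc orbT.
Qed.

Definition encN (l : seq nat) := encL (map enc_nat l).
Definition decN (s : seq bool) := map dec_nat (decL s).
Lemma encNK l : decN (encN l) = l.
Proof. by rewrite /decN /encN encLK -map_comp (eq_map enc_natK) map_id. Qed.
Definition encLab (L : seq (seq nat)) := encL (map encN L).
Definition decLab (s : seq bool) := map decN (decL s).
Lemma encLabK L : decLab (encLab L) = L.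
Proof. by rewrite /decLab /encLab encLK -map_comp (eq_map encNK) map_id. Qed.

Lemma size_encN l n k : size l <= k -> (forall x, x \in l -> x <= n) ->
  size (encN l) <= k * (4 * (trunc_log 2 n).+1).
Proof.
move=> hs hx; apply: leq_trans (size_encL (m := (trunc_log 2 n).+1) _) _.
  by move=> b /mapP[x /hx hx' ->]; apply: size_enc_nat.
rewrite size_map; apply: leq_mul => //; rewrite mulnS; lia.
Qed.

Lemma size_encLab L n k K : size L <= K -> (forall l, l \in L -> size l <= k) ->
  (forall l x, l \in L -> x \in l -> x <= n) ->
  size (encLab L) <= (K * (8 * k + 2)) * (trunc_log 2 n).+1.
Proof.
move=> hK hk hx; apply: leq_trans (size_encL (m := k * (4 * (trunc_log 2 n).+1)) _) _.
  by move=> b /mapP[l hl ->]; apply: size_encN; [apply: hk | move=> x; apply: hx].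

rewrite size_map -mulnA; apply: leq_mul => //.
set B := (trunc_log 2 n).+1. have : 0 < B by []. nia.
Qed.

Definition hdr (L : seq (seq nat)) := nth [::] L 0.
Definition fR L := nth 0 (hdr L) 0.
Definition fd L := nth 0 (hdr L) 1.
Definition fpid L := nth 0 (hdr L) 2.
Definition fadj L := nth 0 (hdr L) 3.
Definition fD (L : seq (seq nat)) := nth [::] L 1.
Definition ftoks (L : seq (seq nat)) := drop 2 L.
Definition tS (t : seq nat) := nth 0 t 0.
Definition tT (t : seq nat) := nth 0 t 1.
Definition tN (t : seq nat) := nth 0 t 2.
Definition tH (t : seq nat) := nth 0 t 3.
Definition tdep (t : seq nat) := nth 0 t 4.
Definition tD (t : seq nat) := drop 5 t.

Definition pok (dep : nat) (D : seq nat) (i : nat) (L' : seq (seq nat)) :=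
  ((fd L').+1 == dep) && all (fun a => (a == i) || (a \in fD L')) D.
Definition tmatch (t t' : seq nat) :=
  [&& tS t' == tS t, tT t' == tT t, tdep t' == tdep t & tD t' == tD t].
Definition dl (a : nat * label) := decLab a.2.

Definition chk_tok (x : nat) (s : seq (nat * label)) (t : seq nat) :=
  (0 < tH t) && has (fun a => [&& a.1 == tN t, a.1 != x &
     if tH t == 1 then (a.1 == tT t) && pok (tdep t) (tD t) a.1 (dl a)
     else has (fun t' => tmatch t t' && (tH t' == (tH t).-1)) (ftoks (dl a))]) s.

Definition check (omega : nat) (x : nat) (L : seq (seq nat)) (s : seq (nat * label)) :=
  [&& all (fun a => fR (dl a) == fR L) s,
      (fd L == 0) ==> ((x == fR L) && (fD L == [::])),
      size (fD L) <= omega, size (ftoks L) <= omega,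
      all (fun a => [|| a.1 == x, a.1 \in fD L | x \in fD (dl a)]) s,
      (fd L == 0) || (if fadj L == 1 then
          has (fun a => [&& a.1 == fpid L, a.1 != x & pok (fd L) (fD L) a.1 (dl a)]) s
        else has (fun t => [&& tS t == x, tT t == fpid L, tdep t == fd L & tD t == fD L]) (ftoks L))
    & all (chk_tok x s) (ftoks L)].

Definition Vf (omega : nat) (x : nat) (s : seq (nat * label)) : bool :=
  has (fun a => (a.1 == x) && check omega x (dl a) s) s.

Lemma mem_view n (e : rel 'I_n) id phi u a :
  a \in view e id phi u -> exists w, ((w == u) || e u w) /\ a = (id w, phi w).
Proof.
rewrite /view mem_sort => /mapP[w]; rewrite mem_enum inE => h ->; by exists w.
Qed.

Lemma view_mem n (e : rel 'I_n) id phi u w :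
  (w == u) || e u w -> (id w, phi w) \in view e id phi u.
Proof. by move=> h; rewrite /view mem_sort; apply: map_f; rewrite mem_enum inE. Qed.

Lemma card_ids n (id : 'I_n -> nat) (s : seq nat) : injective id ->
  #|[set a | id a \in s]| <= size s.
Proof.
move=> inj; rewrite cardE -(size_map id); apply: uniq_leq_size.
  by rewrite map_inj_uniq // enum_uniq.
by move=> x /mapP[a]; rewrite mem_enum inE => h ->.
Qed.

Section Sound.
Variables (omega n : nat) (e : rel 'I_n) (id : 'I_n -> nat) (phi : 'I_n -> label).
Hypotheses (He : simple_graph e) (Hid : valid_ids id)
  (HV : forall v, Vf omega (id v) (view e id phi v)).
Local Notation T := 'I_n.
Let Ld u := decLab (phi u).

Lemma idinj : injective id. Proof. by case: Hid. Qed.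
Lemma esymm : symmetric e. Proof. by case: He. Qed.
Lemma eirr u : e u u = false. Proof. by case: He => _ /(_ u). Qed.
Lemma e_neq u w : e u w -> u != w.
Proof. by move=> h; apply/eqP => E; move: h; rewrite E eirr. Qed.
Lemma e_idneq u w : e u w -> (id w == id u) = false.
Proof. by move=> h; apply/eqP => /idinj E; move: h; rewrite E eirr. Qed.

Lemma chk u : check omega (id u) (Ld u) (view e id phi u).
Proof.
have /hasP[a ha /andP[/eqP ha1 hc]] := HV u.
have [w [hw E]] := mem_view ha; subst a.
move: ha1 => /= /idinj E; subst w; exact: hc.
Qed.

Lemma F_R u w : e u w -> fR (Ld w) = fR (Ld u).
Proof.
move=> h; have /and5P[/allP H _ _ _ _] := chk u.
by apply/eqP; apply: (H (id w, phi w)); apply: view_mem; rewrite h orbT.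
Qed.

Lemma F_root u : fd (Ld u) = 0 -> id u = fR (Ld u) /\ fD (Ld u) = [::].
Proof.
move=> h; have /and5P[_ H _ _ _] := chk u.
by move: H; rewrite h eqxx /= => /andP[/eqP -> /eqP ->].
Qed.

Lemma F_sz u : size (fD (Ld u)) <= omega /\ size (ftoks (Ld u)) <= omega.
Proof. by have /and5P[_ _ -> -> _] := chk u. Qed.

Lemma F_edge u w : e u w -> id w \in fD (Ld u) \/ id u \in fD (Ld w).
Proof.
move=> h; have /and5P[_ _ _ _ /and3P[/allP H _ _]] := chk u.
have hv : (id w, phi w) \in view e id phi u by apply: view_mem; rewrite h orbT.
have := H _ hv.
by rewrite /= e_idneq //= => /orP[]; [left|right].
Qed.

Lemma F_par u : fd (Ld u) != 0 ->
  (fadj (Ld u) == 1 -> exists w, [/\ e u w, id w = fpid (Ld u) & pok (fd (Ld u)) (fD (Ld u)) (id w) (Ld w)]) /\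
  (fadj (Ld u) != 1 -> exists2 t, t \in ftoks (Ld u) &
      [/\ tS t = id u, tT t = fpid (Ld u), tdep t = fd (Ld u) & tD t = fD (Ld u)]).
Proof.
move=> hd; have /and5P[_ _ _ _ /and3P[_ H _]] := chk u.
move: H; rewrite (negbTE hd) /=; split.
  move=> ha; move: H; rewrite ha => /hasP[a /mem_view[w [hw ->]] /and3P[/eqP h1 h2 h3]].
  exists w; split => //; move: hw h2 => /orP[/eqP -> |//]; by rewrite eqxx.
move=> ha; move: H; rewrite (negbTE ha) => /hasP[t ht /and4P[/eqP ? /eqP ? /eqP ? /eqP ?]].
by exists t.
Qed.

Lemma F_tok u t : t \in ftoks (Ld u) -> 0 < tH t /\ exists w, [/\ e u w, id w = tN t &
  if tH t == 1 then id w = tT t /\ pok (tdep t) (tD t) (id w) (Ld w)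
  else exists2 t', t' \in ftoks (Ld w) & tmatch t t' /\ tH t' = (tH t).-1].
Proof.
move=> ht; have /and5P[_ _ _ _ /and3P[_ _ /allP H]] := chk u.
have /andP[h0 /hasP[a /mem_view[w [hw ->]] /and3P[/eqP h1 h2 h3]]] := H t ht.
split => //; exists w; split => //.
  by move: hw h2 => /orP[/eqP -> |//]; rewrite eqxx.
case: ifP h3 => _ /=; first by move=> /andP[/eqP ? ?].
by move=> /hasP[t' ht' /andP[? /eqP ?]]; exists t'.
Qed.

Lemma walk h u t : t \in ftoks (Ld u) -> tH t = h -> exists s, [/\ path e u s,
  id (last u s) = tT t, pok (tdep t) (tD t) (id (last u s)) (Ld (last u s)) &
  all (fun y => has (fun t' => tS t' == tS t) (ftoks (Ld y))) (belast u s)].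
Proof.
elim: h u t => [|k IH] u t ht hh; first by have [] := F_tok ht; rewrite hh.
have [_ [w [euw _ hw]]] := F_tok ht; move: hw; rewrite hh.
case: k IH hh => [|k] IH hh /=.
  move=> [h1 h2]; exists [:: w]; split => //=; rewrite ?euw ?andbT //.
  by apply/hasP; exists t; rewrite ?eqxx.
move=> [t' ht' [/and4P[/eqP h1 /eqP h2 /eqP h3 /eqP h4] h5]].
have [s [ps ls pk al]] := IH w t' ht' h5.
exists (w :: s); split => //=; rewrite ?euw ?ps -?h2 -?h3 -?h4 //.
rewrite -h1 al andbT; apply/hasP; exists t; rewrite ?h1 ?eqxx //.
Qed.

Definition goodb v s := [&& path e v s, uniq (v :: s), id (last v s) == fpid (Ld v),
  pok (fd (Ld v)) (fD (Ld v)) (id (last v s)) (Ld (last v s)) &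
  all (fun y => has (fun t' => tS t' == id v) (ftoks (Ld y))) (belast v s)].
Definition needp v := (fd (Ld v) != 0) && (fadj (Ld v) != 1).

Lemma belast_mem (x y : T) s : y \in x :: s -> y != last x s -> y \in belast x s.
Proof.
by rewrite lastI mem_rcons inE => /orP[/eqP->|//]; rewrite eqxx.
Qed.

Lemma belast_last (x y : T) s : uniq (x :: s) -> y \in belast x s -> y \in x :: s /\ y != last x s.
Proof.
rewrite lastI rcons_uniq mem_rcons => /andP[hn _] hy; split; first by rewrite inE hy orbT.
by apply: contraNneq hn => <-.
Qed.

Lemma ex_good v : exists s, needp v ==> goodb v s.
Proof.
case hn: (needp v); last by exists [::].
move: hn => /andP[hd ha]; have [_ /(_ ha)[t ht [h1 h2 h3 h4]]] := F_par hd.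
have [s [ps ls pk al]] := walk ht erefl.
have E : last v (shorten v s) = last v s by case: (shortenP ps).
have [ps' [us' sub]] : path e v (shorten v s) /\ uniq (v :: shorten v s) /\ {subset shorten v s <= s}.
  by case: (shortenP ps).
exists (shorten v s); rewrite /goodb ps' us' E -h3 -h4 pk ls h2 eqxx /=.
apply/allP => y /(belast_last us') [hy1]; rewrite E => hy2.
have: y \in v :: s by move: hy1; rewrite !inE => /orP[->|/sub ->]; rewrite ?orbT.
move=> /belast_mem /(_ hy2) /(allP al); by rewrite h1.
Qed.

Definition g v := xchoose (ex_good v).
Lemma g_good v : needp v -> goodb v (g v).
Proof. by move=> h; have /implyP := xchooseP (ex_good v); apply. Qed.

Definition p (u : T) : option T :=
  if fd (Ld u) == 0 then None else [pick w | id w == fpid (Ld u)].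

Lemma par u : fd (Ld u) != 0 -> exists w, [/\ p u = Some w, id w = fpid (Ld u),
  pok (fd (Ld u)) (fD (Ld u)) (id w) (Ld w), connect e u w & (fadj (Ld u) == 1 -> e u w)].
Proof.
move=> hd.
suff [w [h1 h2 h3 h4]] : exists w, [/\ id w = fpid (Ld u),
  pok (fd (Ld u)) (fD (Ld u)) (id w) (Ld w), connect e u w & (fadj (Ld u) == 1 -> e u w)].
  exists w; split => //; rewrite /p (negbTE hd).
  case: pickP => [w' /eqP hw'|/(_ w)]; last by rewrite h1 eqxx.
  by rewrite (idinj (etrans hw' (esym h1))).
have [Ha Hn] := F_par hd.
case ha: (fadj (Ld u) == 1).
  have [w [euw h1 h2]] := Ha ha; exists w; split => //; exact: connect1.
have hn : needp u by rewrite /needp hd ha.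
have /and5P[ps _ /eqP hl pk _] := g_good hn.
exists (last u (g u)); split => //; apply/connectP; by exists (g u).
Qed.

Lemma par_dep u w : p u = Some w -> (fd (Ld w)).+1 = fd (Ld u).
Proof.
move=> h; have hd : fd (Ld u) != 0 by move: h; rewrite /p; case: eqP.
have [w' [h1 _ /andP[/eqP hp _] _ _]] := par hd.
by move: h; rewrite h1 => -[<-].
Qed.

Lemma conn_le x y : connect (prel p) x y -> fd (Ld y) <= fd (Ld x).
Proof.
move=> /connectP[s ps ->]; elim: s x ps => //= z s IH x /andP[/eqP hz ps].
by apply: leq_trans (IH _ ps) _; rewrite -(par_dep hz).
Qed.

Lemma sanc_conn x y : sanc p x y -> connect (prel p) x y.
Proof.
rewrite /sanc; case hx: (p x) => [z|//] h.
by apply: connect_trans h; apply: connect1; rewrite /prel hx.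
Qed.

Lemma sanc_lt x y : sanc p x y -> fd (Ld y) < fd (Ld x).
Proof.
rewrite /sanc; case hx: (p x) => [z|//] h.
by rewrite -(par_dep hx) ltnS conn_le.
Qed.

Lemma D_anc k u a : fd (Ld u) <= k -> a \in fD (Ld u) -> exists w, id w = a /\ sanc p u w.
Proof.
elim: k u => [|k IH] u hk ha.
  by move: hk ha; rewrite leqn0 => /eqP /F_root [_ ->].
case hd: (fd (Ld u) == 0); first by move: ha; have [_ ->] := F_root (eqP hd).
have [w [pw hw /andP[/eqP hdep /allP al] _ _]] := par (negbT hd).
have := al a ha; case/orP => [/eqP ->|hb].
  by exists w; rewrite /sanc pw connect0.
have [z [hz sz]] := IH w ltac:(lia) hb.
by exists z; split => //; rewrite /sanc pw sanc_conn.
Qed.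

Lemma R_conn u w : connect e u w -> fR (Ld w) = fR (Ld u).
Proof.
move=> /connectP[s ps ->]; elim: s u ps => //= z s IH u /andP[hz ps].
by rewrite IH // (F_R hz).
Qed.

Lemma root_ex k u : fd (Ld u) <= k -> exists z, [/\ connect (prel p) u z, fd (Ld z) = 0 & connect e u z].
Proof.
elim: k u => [|k IH] u hk.
  by exists u; split => //; move: hk; rewrite leqn0 => /eqP.
case hd: (fd (Ld u) == 0); first by exists u; rewrite (eqP hd).
have [w [pw _ /andP[/eqP hdep _] cw _]] := par (negbT hd).
have [z [h1 h2 h3]] := IH w ltac:(lia).
exists z; split => //; last exact: connect_trans h3.
by apply: connect_trans h1; apply: connect1; rewrite /prel pw.
Qed.

Lemma D_up u v a : connect (prel p) u v -> id a \in fD (Ld u) -> fd (Ld a) < fd (Ld v) ->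
  id a \in fD (Ld v).
Proof.
move=> /connectP[s ps ->]; elim: s u ps => //= z s IH u /andP[/eqP hz ps] ha hlt.
apply: IH => //.
have hd : fd (Ld u) != 0 by move: hz; rewrite /p; case: eqP.
have [w [pw hw /andP[_ /allP al] _ _]] := par hd.
move: hz; rewrite pw => -[?]; subst w.
case/orP: (al _ ha) => // /eqP /idinj E; subst a.
have : connect (prel p) z (last z s) by apply/connectP; exists s.
by move=> /conn_le; lia.
Qed.

Theorem sound : lv_treewidth_le e omega.
Proof.
move=> v0 C.
have [r [_ hr0 cr]] := root_ex (leqnn _) (u := v0).
exists r, p, [seq (v, g v) | v <- enum needp].
have rootC : forall v, v \in C -> connect (prel p) v r.
  move=> v; rewrite inE => cv.
  have [z [h1 h2 h3]] := root_ex (leqnn _) (u := v).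
  have [iz _] := F_root h2; have [ir _] := F_root hr0.
  suff -> : r = z by [].
  apply: idinj; rewrite iz ir (R_conn h3) (R_conn cv) (R_conn cr) //.
split.
- split; first split.
  + by rewrite inE.
  + by rewrite /p hr0 eqxx.
  + move=> v w; rewrite !inE => cv pv.
    have hd : fd (Ld v) != 0 by move: pv; rewrite /p; case: eqP.
    have [w' [pw _ _ cw _]] := par hd; move: pv; rewrite pw => -[<-].
    exact: connect_trans cw.
  + exact: rootC.
  + move=> u v cu cv euv; case: (F_edge euv) => h.
      have [w [/idinj E s]] := D_anc (leqnn _) h; subst w.
      by rewrite (sanc_conn s).
    have [w [/idinj E s]] := D_anc (leqnn _) h; subst w.
    by rewrite (sanc_conn s) orbT.
- move=> v cv.
  have sub : str e C p v \subset v |: [set a | id a \in fD (Ld v)].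
    apply/subsetP => a; rewrite /str !inE => /orP[->//|/andP[sa /existsP[u /and3P[cu cuv eau]]]].
    apply/orP; right.
    have eua : e u a by rewrite esymm.
    case: (F_edge eua) => h; first by apply: D_up cuv h (sanc_lt sa).
    have [w [/idinj E s]] := D_anc (leqnn _) h; subst w.
    have := sanc_lt s; have := sanc_lt sa; have := conn_le cuv; lia.
  apply: leq_trans (subset_leq_card sub) _.
  rewrite cardsU1; have := card_ids (fD (Ld v)) idinj; have := (F_sz v).1; case: (_ \notin _); lia.
- apply/allP => q /mapP[v]; rewrite mem_enum => hv ->.
  by have /and5P[? ? _ _ _] := g_good hv; rewrite /opath /= ; apply/andP.
- move=> w; rewrite /congestion count_map.
  set S := filter (preim (fun v => (v, g v)) (fun q => w \in belast q.1 q.2)) (enum needp).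
  rewrite -size_filter -/S.
  have uS : uniq (map id S) by rewrite (map_inj_uniq idinj) /S filter_uniq // enum_uniq.
  apply: leq_trans (F_sz w).2; rewrite -(size_map id S) -(size_map tS (ftoks (Ld w))).
  apply: uniq_leq_size => // x /mapP[v]; rewrite mem_filter mem_enum => /andP[hb hv] ->.
  have /and5P[_ _ _ _ /allP al] := g_good hv.
  have /hasP[t ht /eqP <-] := al w hb.
  exact: map_f.
- move=> v w cv pv.
  have hd : fd (Ld v) != 0 by move: pv; rewrite /p; case: eqP.
  have [w' [pw hw _ _ ea]] := par hd; move: pv; rewrite pw => -[?]; subst w'.
  case ha: (fadj (Ld v) == 1); first by left; apply: ea.
  have hn : needp v by rewrite /needp hd ha.
  right; exists (v, g v); first by apply: map_f; rewrite mem_enum.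
  split => //=; have /and5P[_ _ /eqP hl _ _] := g_good hn.
  by apply: idinj; rewrite hl hw.
Qed.
End Sound.

Section Tree.
Variables (T : finType) (p : T -> option T).

Lemma conn_step x y : connect (prel p) x y -> x = y \/ exists2 z, p x = Some z & connect (prel p) z y.
Proof.
move=> /connectP[[|z s] /= ps ->]; first by left.
by move: ps => /andP[/eqP hz ps]; right; exists z => //; apply/connectP; exists s.
Qed.

Lemma sanc_connG x y : sanc p x y -> connect (prel p) x y.
Proof.
rewrite /sanc; case hx: (p x) => [z|//] h.
by apply: connect_trans h; apply: connect1; rewrite /prel hx.
Qed.

Lemma sanc_par x z a : p x = Some z -> sanc p x a = (a == z) || sanc p z a.
Proof.
move=> hx; rewrite {1}/sanc hx; apply/idP/idP.
  case/conn_step => [->|[z' hz' c]]; first by rewrite eqxx.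
  by rewrite /sanc hz' c orbT.
by case/orP => [/eqP ->|/sanc_connG]; [apply: connect0|].
Qed.

Variables (C : {set T}) (r : T).
Hypothesis Hrt : rooted_tree_on C r p.

Lemma acyc x : x \in C -> ~~ sanc p x x.
Proof.
case: Hrt => _ pr _ cr xC; apply/negP; rewrite /sanc.
case hx: (p x) => [x1|//] c1.
have claim : forall y, connect (prel p) x y -> connect (prel p) y x.
  move=> y /connectP[s ps ->]; elim/last_ind: s ps => [|s z IH] //=.
  rewrite rcons_path last_rcons => /andP[ps /eqP hz].
  case: (conn_step (IH ps)) => [E|[z' hz' c]].
    by move: hz; rewrite E hx => -[<-].
  by move: hz; rewrite hz' => -[<-].
case: (conn_step (claim _ (cr _ xC))) => [E|[z' hz' _]].
  by move: hx; rewrite -E pr.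
by rewrite pr in hz'.
Qed.

Definition dep x := #|[set a | sanc p x a]|.

Lemma dep_par x z : x \in C -> p x = Some z -> dep x = (dep z).+1.
Proof.
move=> xC hx; have zC : z \in C by case: Hrt => _ _ /(_ x z xC hx).
rewrite /dep (_ : [set a | sanc p x a] = z |: [set a | sanc p z a]).
  by rewrite cardsU1 inE (negbTE (acyc zC)).
by apply/setP => a; rewrite !inE (sanc_par a hx).
Qed.

Lemma sanc_root a : sanc p r a = false.
Proof. by case: Hrt => _ pr _ _; rewrite /sanc pr. Qed.

Lemma dep0 x : x \in C -> dep x = 0 -> x = r.
Proof.
move=> xC; case hx: (p x) => [z|].
  by rewrite /dep => /eqP; rewrite cards_eq0 => /eqP/setP/(_ z); rewrite !inE (sanc_par z hx) eqxx.
move=> _; case: Hrt => _ _ _ /(_ x xC) /conn_step [//|[z]]; by rewrite hx.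
Qed.

Lemma dep_root : dep r = 0.
Proof. by rewrite /dep (_ : [set a | _] = set0) ?cards0 //; apply/setP => a; rewrite !inE sanc_root. Qed.

End Tree.

Section Complete.
Variables (omega n : nat) (e : rel 'I_n) (id : 'I_n -> nat).
Hypotheses (He : simple_graph e) (Hid : valid_ids id) (H : lv_treewidth_le e omega).
Local Notation T := 'I_n.

Lemma idinj' : injective id. Proof. by case: Hid. Qed.
Lemma esymm' : symmetric e. Proof. by case: He. Qed.
Lemma e_neq' u w : e u w -> u != w.
Proof. by move=> h; apply/eqP => E; move: h; rewrite E; case: He => _ ->. Qed.

Definition Cu (u : T) := [set x | connect e u x].

Definition spec v0 (x : T * (T -> option T) * seq (T * seq T)) :=
  [/\ elim_tree e (Cu v0) x.1.1 x.1.2, width_le e (Cu v0) x.1.2 omega, all (opath e) x.2,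
      congestion_le x.2 omega & witnesses e (Cu v0) x.1.2 x.2].

Lemma ex_spec v0 : exists x, spec v0 x.
Proof. by have [r [p [P [? ? ? ? ?]]]] := H v0; exists (r, p, P). Qed.

Definition Fs v0 := proj1_sig (constructive_indefinite_description _ (ex_spec v0)).
Lemma Fs_spec v0 : spec v0 (Fs v0).
Proof. exact: proj2_sig (constructive_indefinite_description _ (ex_spec v0)). Qed.

Definition rep (u : T) := odflt u [pick x | connect e u x].

Lemma conn_eq u w : connect e u w -> connect e u =1 connect e w.
Proof.
move=> c x; apply/idP/idP => h.
  have c' : connect e w u by rewrite (sym_connect_sym esymm' w u).
  exact: connect_trans c' h.
exact: connect_trans c h.
Qed.

Lemma rep_eq u w : connect e u w -> rep u = rep w.
Proof.
move=> c; rewrite /rep (@eq_pick _ (fun x => connect e u x) (fun x => connect e w x) (conn_eq c)).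
by case: pickP => [//|/(_ w)]; rewrite connect0.
Qed.

Lemma rep_conn u : connect e u (rep u).
Proof. by rewrite /rep; case: pickP => [x //|/(_ u)]; rewrite connect0. Qed.

Lemma Cu_rep u : Cu (rep u) = Cu u.
Proof.
apply/setP => x; rewrite !inE; symmetry; apply: conn_eq; exact: rep_conn.
Qed.

Definition St u := Fs (rep u).
Definition rt u := (St u).1.1.
Definition pt u := (St u).1.2.
Definition Pt u := (St u).2.

Lemma St_spec u : [/\ elim_tree e (Cu u) (rt u) (pt u), width_le e (Cu u) (pt u) omega,
  all (opath e) (Pt u), congestion_le (Pt u) omega & witnesses e (Cu u) (pt u) (Pt u)].
Proof. by rewrite -Cu_rep; exact: Fs_spec. Qed.

Lemma St_eq u w : connect e u w -> St w = St u.
Proof. by move=> c; rewrite /St (rep_eq c). Qed.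

Lemma Cu_eq u w : connect e u w -> Cu w = Cu u.
Proof. by move=> c; apply/setP => x; rewrite !inE (conn_eq c). Qed.

Lemma uCu u : u \in Cu u. Proof. by rewrite inE connect0. Qed.

Lemma rtree u : rooted_tree_on (Cu u) (rt u) (pt u).
Proof. by case: (St_spec u) => -[]. Qed.

Definition depl u := dep (pt u) u.
Definition Dl u := [seq id a | a <- enum (str e (Cu u) (pt u) u :\ u)].
Definition pidl u := if pt u u is Some w then id w else 0.
Definition adjl u := if pt u u is Some w then nat_of_bool (e u w) else 1.
Definition needq v := if pt v v is Some w then ~~ e v w else false.
Definition qgood v (s : seq T) := if pt v v is Some w then e v w || (((v, s) \in Pt v) && (last v s == w)) else true.
Lemma ex_q v : exists s, qgood v s.
Proof.
rewrite /qgood; case hv: (pt v v) => [w|]; last by exists [::].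
case: (St_spec v) => _ _ _ _ /(_ v w (uCu v) hv) [->|[[x s] hq [/= E1 E2]]]; first by exists [::].
by subst x; exists s; rewrite hq E2 eqxx orbT.
Qed.
Definition qv v := xchoose (ex_q v).
Definition Lv v := v :: qv v.
Definition tokl (v u : T) : seq nat :=
  [:: id v; pidl v; id (nth u (Lv v) (index u (Lv v)).+1); size (qv v) - index u (Lv v); depl v] ++ Dl v.
Definition tcond u v := [&& connect e u v, needq v & u \in belast v (qv v)].
Definition toks u := [seq tokl v u | v <- enum (tcond u)].
Definition Lab u := [:: [:: id (rt u); depl u; pidl u; adjl u]; Dl u] ++ toks u.
Definition phi u := encLab (Lab u).


Lemma conn_struct u w : connect e u w -> [/\ rt w = rt u, pt w = pt u, Pt w = Pt u & Cu w = Cu u].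
Proof. by move=> c; rewrite /rt /pt /Pt (St_eq c) (Cu_eq c). Qed.

Lemma par_conn u w : pt u u = Some w -> connect e u w.
Proof. by move=> h; case: (rtree u) => _ _ /(_ u w (uCu u) h); rewrite inE. Qed.

Lemma Dl_mem u y : y != u -> sanc (pt u) u y ->
  [exists x, [&& x \in Cu u, connect (prel (pt u)) x u & e y x]] -> id y \in Dl u.
Proof.
move=> h1 h2 h3; apply: map_f; rewrite mem_enum /str !inE h1 /= h2 /=.
by rewrite h3 orbT.
Qed.

Lemma pok_par u w : pt u u = Some w -> pok (depl u) (Dl u) (id w) (Lab w).
Proof.
move=> hw; have c := par_conn hw; have [_ ptw _ Cw] := conn_struct c.
rewrite /pok /fd /hdr /= /depl ptw (dep_par (rtree u) (uCu u) hw) eqxx /=.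
apply/allP => a /mapP[y]; rewrite mem_enum /str !inE => /andP[hyu /orP[/eqP E|/andP[sy hx]]] ->.
  by rewrite E eqxx in hyu.
move: sy; rewrite (sanc_par y hw) => /orP[/eqP ->|sy]; first by rewrite eqxx.
apply/orP; right; rewrite /fD /= /Dl ptw Cw.
case: (y =P w) => [E|/eqP ne].
  subst y; have wC : w \in Cu u by rewrite inE.
  by have := acyc (rtree u) wC; rewrite sy.
apply: map_f; rewrite mem_enum /str !inE ne /= sy /=.
apply/orP; right; move: hx => /existsP[x /and3P[xC cx eyx]].
apply/existsP; exists x; rewrite xC eyx andbT /=.
by apply: connect_trans cx _; apply: connect1; rewrite /prel hw.
Qed.

Lemma qprops v w : pt v v = Some w -> ~~ e v w ->
  [/\ (v, qv v) \in Pt v, last v (qv v) = w, path e v (qv v) & uniq (v :: qv v)].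
Proof.
move=> hv ne; have := xchooseP (ex_q v); rewrite -/(qv v) /qgood hv (negbTE ne) /=.
move=> /andP[hq /eqP hl]; split => //.
  by case: (St_spec v) => _ _ /allP /(_ _ hq) /andP[].
by case: (St_spec v) => _ _ /allP /(_ _ hq) /andP[].
Qed.

Lemma toks_size u : size (toks u) <= omega.
Proof.
rewrite /toks size_map.
have inj : injective (fun v : T => (v, qv v)) by move=> v1 v2 [].
rewrite -(size_map (fun v : T => (v, qv v))).
case: (St_spec u) => _ _ _ /(_ u) cg _.
apply: leq_trans cg; rewrite /congestion -size_filter.
apply: uniq_leq_size; first by rewrite (map_inj_uniq inj) enum_uniq.
move=> q /mapP[v]; rewrite mem_enum => /and3P[c hn hb] ->.
rewrite mem_filter /= hb /=.
move: hn; rewrite /needq; case hv: (pt v v) => [w|//] ne.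
have [hq _ _ _] := qprops hv ne.
by have [_ _ <- _] := conn_struct c.
Qed.

Lemma edge_ok u w : e u w -> [|| id w == id u, id w \in Dl u | id u \in Dl w].
Proof.
move=> euw; have c : connect e u w by apply: connect1.
have wC : w \in Cu u by rewrite inE.
have ne := e_neq' euw.
have [[_ Hel] _ _ _ _] := St_spec u; have := Hel u w (uCu u) wC euw; case/orP => hc.
  case: (conn_step hc) => [E|[z hz cz]]; first by rewrite E eqxx in ne.
  apply/orP; right; apply/orP; left; apply: Dl_mem; first by rewrite eq_sym.
    by rewrite /sanc hz.
  apply/existsP; exists u; rewrite uCu connect0 /= esymm'; exact: euw.
case: (conn_step hc) => [E|[z hz cz]]; first by rewrite E eqxx in ne.
have [_ ptw _ Cw] := conn_struct c.
apply/orP; right; apply/orP; right; apply: Dl_mem; first by [].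
  by rewrite ptw /sanc hz.
apply/existsP; exists w; rewrite Cw wC connect0 /=; exact: euw.
Qed.

Lemma belast_mem' (x y : T) s : y \in x :: s -> y != last x s -> y \in belast x s.
Proof. by rewrite lastI mem_rcons inE => /orP[/eqP->|//]; rewrite eqxx. Qed.

Lemma belast_last' (x y : T) s : uniq (x :: s) -> y \in belast x s -> y \in x :: s /\ y != last x s.
Proof.
rewrite lastI rcons_uniq mem_rcons => /andP[hn _] hy; split; first by rewrite inE hy orbT.
by apply: contraNneq hn => <-.
Qed.

Lemma tok_ok u t : t \in toks u -> chk_tok (id u) (view e id phi u) t.
Proof.
move=> /mapP[v]; rewrite mem_enum => /and3P[c hn hb] ->.
move: hn; rewrite /needq; case hv: (pt v v) => [w|//] ne.
have [hq hl ps us] := qprops hv ne.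
rewrite /tokl /Lv; move: hq hl ps us hb; move Es: (qv v) => s hq hl ps us hb.
have [uL uNl] := belast_last' us hb.
have nthl : nth u (v :: s) (size s) = last v s.
  by rewrite (set_nth_default v) //= -[size s]/((size (v :: s)).-1) nth_last.
have hj : index u (v :: s) < size s.
  have : index u (v :: s) < size (v :: s) by rewrite index_mem.
  rewrite /= ltnS leq_eqVlt => /orP[/eqP E|//].
  by move: uNl; rewrite -nthl -E nth_index // eqxx.
move: hj; move Ej: (index u (v :: s)) => j hj.
rewrite /chk_tok /tH /=; apply/andP; split; first by rewrite subn_gt0.
set u' := nth u (v :: s) j.+1.
have euu' : e u u'.
  by have := (pathP u ps) j hj; rewrite /= -[in nth u (v :: s) j]Ej nth_index // Ej.
apply/hasP; exists (id u', phi u'); first by apply: view_mem; rewrite euu' orbT.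
have ne' : id u' != id u by apply/eqP => /idinj' E; move: (e_neq' euu'); rewrite E eqxx.
rewrite /= eqxx ne' /dl /= encLabK.
case: ifP => h1.
  have E : u' = w.
    rewrite -hl -nthl /u'; congr nth; have h1n : size s - j = 1 := eqP h1; lia.
  by rewrite E /tT /= /pidl hv eqxx /= /tdep /tD /= drop0; apply: pok_par.
have hne : size s - j <> 1 by move=> E; rewrite E eqxx in h1.
have hj' : j.+1 < size s by lia.
apply/hasP; exists (tokl v u').
  rewrite /ftoks /Lab /= /toks drop0; apply: map_f; rewrite mem_enum /tcond unfold_in /needq hv ne Es /=.
  apply/andP; split.
    apply: connect_trans c; apply: connect1; by rewrite esymm'.
  apply: belast_mem'; first by apply: mem_nth; rewrite /= ltnS; exact: ltnW hj'.
  apply/eqP => E.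
  have l1 : j.+1 < size (v :: s) by rewrite /= ltnS; exact: ltnW hj'.
  have l2 : size s < size (v :: s) by [].
  have := index_uniq u l1 us; have := index_uniq u l2 us.
  rewrite nthl -E -/u' => ->; move=> h; by move: hj'; rewrite h ltnn.
rewrite /tmatch /tokl /Lv Es. rewrite [index u' _]index_uniq // /tS /tT /tdep /tD /tH /= !eqxx /=. by rewrite subnS.

Qed.

Lemma Dl_size u : size (Dl u) <= omega.
Proof.
rewrite /Dl size_map -cardE.
have [_ /(_ u (uCu u)) hw _ _ _] := St_spec u.
move: hw; rewrite (cardsD1 u) (_ : u \in _ = true) ?add1n //.
by rewrite /str !inE eqxx.
Qed.

Lemma labK w : dl (id w, phi w) = Lab w.
Proof. exact: encLabK. Qed.

Lemma check_ok u : check omega (id u) (Lab u) (view e id phi u).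
Proof.
have Hnb : forall w, (w == u) || e u w -> connect e u w.
  by move=> w /orP[/eqP ->|h]; [apply: connect0|apply: connect1].
apply/and5P; split.
- apply/allP => a /mem_view[w [hw ->]]; rewrite labK /fR /hdr /=.
  by have [-> _ _ _] := conn_struct (Hnb _ hw).
- apply/implyP; rewrite /fd /hdr /= => /eqP h0.
  have ur := dep0 (rtree u) (uCu u) h0.
  rewrite /fR /hdr /= -ur eqxx /=; apply/eqP.
  rewrite /fD /= /Dl (_ : _ :\ _ = set0) ?enum_set0 //.
  apply/setP => a; rewrite /str !inE; case: (a =P u) => //= _.
  by have := sanc_root (rtree u) a; rewrite -ur => ->.
- exact: Dl_size.
- by rewrite /ftoks /Lab /= drop0; apply: toks_size.
apply/and3P; split.
- apply/allP => a /mem_view[w [hw ->]] /=; rewrite labK.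
  case/orP: hw => [/eqP ->|euw]; first by rewrite eqxx.
  exact: edge_ok.
- rewrite /fd /hdr /=; case hd: (depl u == 0) => //=.
  case hp: (pt u u) => [w|]; last first.
    by move: hd; rewrite /depl /dep (_ : [set a | _] = set0) ?cards0 //; apply/setP => a; rewrite !inE /sanc hp.
  rewrite /fadj /hdr /= /adjl /fpid /hdr /= /pidl hp.
  case euw: (e u w) => /=.
    apply/hasP; exists (id w, phi w); first by apply: view_mem; rewrite euw orbT.
    rewrite /= eqxx labK /=.
    have -> : (id w != id u) by apply/eqP => /idinj' E; move: (e_neq' euw); rewrite E eqxx.
    exact: pok_par.
  apply/hasP; exists (tokl u u).
    rewrite /ftoks /Lab /= drop0 /toks; apply: map_f; rewrite mem_enum /tcond unfold_in /needq hp euw connect0 /=.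
    have [_ hl _ us] := qprops hp (negbT euw).
    move: hl us; case: (qv u) => [/= E|x s _ _]; last by rewrite /= mem_head.
    by have := acyc (rtree u) (uCu u); rewrite /sanc hp E connect0.
  by rewrite /tS /tT /tdep /tD /tokl /= /pidl hp !eqxx drop0 eqxx.
- by apply/allP => t; rewrite /ftoks /Lab /= drop0; apply: tok_ok.
Qed.

Lemma Vf_ok u : Vf omega (id u) (view e id phi u).
Proof.
apply/hasP; exists (id u, phi u); first by apply: view_mem; rewrite eqxx.
by rewrite /= eqxx labK check_ok.
Qed.

Lemma id_le x : id x <= n. Proof. by case: Hid => _ /(_ x) /andP[]. Qed.
Lemma card_le (A : {set T}) : #|A| <= n.
Proof. by apply: leq_trans (max_card _) _; rewrite card_ord. Qed.
Lemma pidl_le x : pidl x <= n. Proof. by rewrite /pidl; case: (pt x x) => // w; apply: id_le. Qed.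

Lemma lab_size u : size (phi u) <= ((omega + 2) * (8 * (omega + 5) + 2)) * (trunc_log 2 n).+1.
Proof.
have n0 : 0 < n by apply: leq_ltn_trans (ltn_ord u).
have hK : size (Lab u) <= omega + 2 by rewrite /Lab /= addn2 !ltnS; exact: toks_size.
have hk : forall l, l \in Lab u -> size l <= omega + 5.
  move=> l; rewrite /Lab mem_cat !inE => /orP[/orP[/eqP ->|/eqP ->]|]; first by rewrite /=; lia.
    by apply: leq_trans (Dl_size u) _; rewrite leq_addr.
  move=> /mapP[v _ ->]; rewrite /tokl size_cat /=. by rewrite addnC leq_add2r Dl_size.
apply: (size_encLab hK hk).
move=> l x; rewrite /Lab mem_cat !inE => /orP[/orP[/eqP ->|/eqP ->]|].
- rewrite !inE => /or4P[] /eqP ->; rewrite ?id_le ?card_le ?pidl_le //.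
  by rewrite /adjl; case: (pt u u) => // w; case: (e u w).
- by move=> /mapP[a _ ->]; apply: id_le.
move=> /mapP[v]; rewrite mem_enum unfold_in => /and3P[_ hn _] ->.
rewrite mem_cat !inE => /orP[/or4P[| | |/orP[]] /eqP ->|]; rewrite ?id_le ?card_le ?pidl_le //.
  move: hn; rewrite /needq; case hv: (pt v v) => [w|//] ne.
  have [_ _ _ us] := qprops hv ne.
  apply: leq_trans (leq_subr _ _) _.
  have : size (v :: qv v) <= size (enum T) by apply: uniq_leq_size => // y; rewrite mem_enum.
  by rewrite size_enum_ord /= => /ltnW.
by move=> /mapP[a _ ->]; apply: id_le.
Qed.

End Complete.
Theorem proposition6 (omega : nat) :
  exists V : nat -> seq (nat * label) -> bool,
    log_size_PLS (fun n (e : rel 'I_n) => lv_treewidth_le e omega) V.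
Proof.
exists (Vf omega), ((omega + 2) * (8 * (omega + 5) + 2)); split.
- move=> n e id He Hid H; exists (phi id He H); split => v.
    exact: lab_size.
  exact: Vf_ok.
- move=> n e id He Hid Hn phi.
  case: (boolP [forall v, Vf omega (id v) (view e id phi v)]) => [/forallP h|].
    by case: Hn; apply: (sound He Hid h).
  by rewrite negb_forall => /existsP[v /negbTE hv]; exists v.
Qed.
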